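(* For every nonzero ternary cubic form $p\in P_{3,3}$, \[ \frac{\|p\|_\infty}{\|p\|_B}\geq\frac{1}{\sqrt 7}. \] Equality holds if $p=g^*\mathrm{Ch}_{3,3}$ for some $g\in CO(3)$, where $\mathrm{Ch}_{3,3}(x)=x_1^3-3x_1(x_2^2+x_3^2)$.
   Context: $P_{d,n}$ denotes the real vector space of homogeneous polynomials (forms) of degree $d$ in $n$ real variables. For $p\in P_{d,n}$, the uniform norm is $\|p\|_\infty=\max_{\|x\|=1}|p(x)|$, where $\|\cdot\|$ is the Euclidean norm. Writing $p(x)=\sum_{|\alpha|=d}c_\alpha x^\alpha$, the Bombieri norm is \[ \|p\|_B=\Big(\sum_{|\alpha|=d}\binom{d}{\alpha}^{-1}|c_\alpha|^2\Big)^{1/2},\qquad \binom{d}{\alpha}=\frac{d!}{\alpha_1!\cdots\alpha_n!}. \] The conformal orthogonal group is $CO(n)=\mathbb{R}_{>0}\times O(n)$. It acts on $P_{d,n}$ by $(g^*p)(x)=s\,p(\rho^{-1}x)$ for $g=(s,\rho)$. *)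

(* Defs.v *)
From Stdlib Require Import Reals Lra Arith List ClassicalEpsilon.
Import ListNotations.
Open Scope R_scope.

Record vec3 := mkV { v1 : R; v2 : R; v3 : R }.

Definition euclid_norm (x : vec3) : R :=
  sqrt (v1 x ^ 2 + v2 x ^ 2 + v3 x ^ 2).

(* A ternary cubic form p ∈ P_{3,3}: one real coefficient c_α for each
   multi-index α = (a,b,c) with a+b+c = 3. *)
Record cubic3 := mkCubic {
  c300 : R; c210 : R; c201 : R; c120 : R; c111 : R;
  c102 : R; c030 : R; c021 : R; c012 : R; c003 : R }.

Definition cubic_zero : cubic3 := mkCubic 0 0 0 0 0 0 0 0 0 0.

Definition coeffs (p : cubic3) : list ((nat * nat * nat) * R) :=
  [ ((3,0,0)%nat, c300 p); ((2,1,0)%nat, c210 p); ((2,0,1)%nat, c201 p);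
    ((1,2,0)%nat, c120 p); ((1,1,1)%nat, c111 p); ((1,0,2)%nat, c102 p);
    ((0,3,0)%nat, c030 p); ((0,2,1)%nat, c021 p); ((0,1,2)%nat, c012 p);
    ((0,0,3)%nat, c003 p) ].

Definition monom (al : nat * nat * nat) (x : vec3) : R :=
  let '(a, b, c) := al in v1 x ^ a * v2 x ^ b * v3 x ^ c.

Definition eval (p : cubic3) (x : vec3) : R :=
  fold_right (fun ac s => snd ac * monom (fst ac) x + s) 0 (coeffs p).

Definition multinom (al : nat * nat * nat) : R :=
  let '(a, b, c) := al in
  INR (fact (a + b + c)) / (INR (fact a) * INR (fact b) * INR (fact c)).

Definition bombieri_norm (p : cubic3) : R :=
  sqrt (fold_right (fun ac s => / multinom (fst ac) * Rabs (snd ac) ^ 2 + s)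
          0 (coeffs p)).

(* Uniform norm ‖p‖_∞ = max_{‖x‖=1} |p(x)|, defined as the least upper bound
   of { |p(x)| : ‖x‖ = 1 } (chosen by classical choice; this lub exists). *)
Definition sphere_values (p : cubic3) (r : R) : Prop :=
  exists x : vec3, euclid_norm x = 1 /\ r = Rabs (eval p x).

Definition uniform_norm (p : cubic3) : R :=
  epsilon (inhabits 0) (fun M => is_lub (sphere_values p) M).

Definition mat3 := nat -> nat -> R.

Definition is_orthogonal (rho : mat3) : Prop :=
  forall i j : nat, (i < 3)%nat -> (j < 3)%nat ->
    rho 0%nat i * rho 0%nat j + rho 1%nat i * rho 1%nat j
      + rho 2%nat i * rho 2%nat j = if Nat.eqb i j then 1 else 0.

(* ρ^{-1} x, which for orthogonal ρ is ρ^T x. *)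
Definition mat_inv_apply (rho : mat3) (x : vec3) : vec3 :=
  mkV (rho 0%nat 0%nat * v1 x + rho 1%nat 0%nat * v2 x + rho 2%nat 0%nat * v3 x)
      (rho 0%nat 1%nat * v1 x + rho 1%nat 1%nat * v2 x + rho 2%nat 1%nat * v3 x)
      (rho 0%nat 2%nat * v1 x + rho 1%nat 2%nat * v2 x + rho 2%nat 2%nat * v3 x).

(* Ch_{3,3}(x) = x1^3 - 3 x1 (x2^2 + x3^2) = x1^3 - 3 x1 x2^2 - 3 x1 x3^2 *)
Definition Ch33 : cubic3 := mkCubic 1 0 0 (-3) 0 (-3) 0 0 0 0.

(* p = g^* q for g = (s, ρ) ∈ CO(3):  p(x) = s q(ρ^{-1} x) for all x
   (a form is determined by its polynomial function). *)
Definition is_CO3_pullback (p q : cubic3) : Prop :=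
  exists (s : R) (rho : mat3), 0 < s /\ is_orthogonal rho /\
    forall x : vec3, eval p x = s * eval q (mat_inv_apply rho x).

(* Main.v *)
Require Import Defs.
From Stdlib Require Import Reals Lra Psatz ClassicalEpsilon.
Open Scope R_scope.


Definition sum3 (f : nat -> R) : R := f 0%nat + f 1%nat + f 2%nat.
Definition vec := nat -> R.

Definition tt (p : cubic3) (i j k : nat) : R :=
  match i, j, k with
  | 0, 0, 0 => c300 p
  | 0, 0, 1 | 0, 1, 0 | 1, 0, 0 => c210 p / 3
  | 0, 0, _ | 0, _, 0 | _, 0, 0 => c201 p / 3
  | 0, 1, 1 | 1, 0, 1 | 1, 1, 0 => c120 p / 3
  | 1, 1, 1 => c030 p
  | 1, 1, _ | 1, _, 1 | _, 1, 1 => c021 p / 3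
  | 0, 1, _ | 0, _, 1 | 1, 0, _ | 1, _, 0 | _, 0, 1 | _, 1, 0 => c111 p / 6
  | 0, _, _ | _, 0, _ | _, _, 0 => c102 p / 3
  | 1, _, _ | _, 1, _ | _, _, 1 => c012 p / 3
  | _, _, _ => c003 p
  end.

Definition Tr (p : cubic3) (a b c : vec) : R :=
  sum3 (fun i => sum3 (fun j => sum3 (fun k => tt p i j k * a i * b j * c k))).

Definition ev (p : cubic3) (x : vec) : R := eval p (mkV (x 0%nat) (x 1%nat) (x 2%nat)).

Definition Fn (p : cubic3) : R :=
  sum3 (fun i => sum3 (fun j => sum3 (fun k => (tt p i j k)^2))).

Definition nrm2 (x : vec) : R := sum3 (fun i => x i ^ 2).
Definition dot (x y : vec) : R := sum3 (fun i => x i * y i).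

Lemma ev_Tr : forall p x, ev p x = Tr p x x x.
Proof.
  intros p x. unfold ev, eval, coeffs, monom, Tr, sum3, tt; simpl. field.
Qed.

Lemma abs_sq_aux : forall x, Rabs x * (Rabs x * 1) = x * (x * 1).
Proof. intros x. rewrite !Rmult_1_r, <- Rabs_mult. apply Rabs_pos_eq. nra. Qed.

Lemma bomb_Fn : forall p, bombieri_norm p = sqrt (Fn p).
Proof.
  intros p. unfold bombieri_norm, Fn, coeffs, multinom, sum3, tt; simpl.
  f_equal. rewrite !abs_sq_aux. field.
Qed.
Definition Wt (a b X Y : R) := (1 + 2*(a*X + b*Y/3))/3.
Definition bin (c0 c1 c2 c3 X Y : R) := X^3*c0 + 3*X^2*Y*c1 + 3*X*Y^2*c2 + Y^3*c3.

Lemma I1 : forall C S h c0 c1 c2 c3 : R, C^2+S^2 = 1 -> h^2 = 3/4 ->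
  Wt (4*C^3-3*C) (3*S-4*S^3) C S * bin c0 c1 c2 c3 C S + Wt (4*C^3-3*C) (3*S-4*S^3) (-C/2-h*S) (h*C-S/2) * bin c0 c1 c2 c3 (-C/2-h*S) (h*C-S/2) + Wt (4*C^3-3*C) (3*S-4*S^3) (-C/2+h*S) (-h*C-S/2) * bin c0 c1 c2 c3 (-C/2+h*S) (-h*C-S/2) = (4*C^3-3*C)*c0+(3*S-4*S^3)*c1.
Proof.
  intros C S h c0 c1 c2 c3 H1 H2. unfold Wt, bin.
  transitivity ((4*C^3-3*C)*c0+(3*S-4*S^3)*c1 + (C^2+S^2-1)*((4)*S*c1 + (-4/3)*S*h^2*c1 + (-1/4)*S^3*c3 + (-1/3)*S^3*h^2*c1 + (-1)*S^5*c3 + (-4/3)*S^5*h^2*c1 + (-4/3)*C*h^2*c0 + (-32/9)*C*h^4*c0 + (-3/4)*C*S^2*c2 + (-2)*C*S^2*h^2*c2 + (-1/3)*C*S^2*h^2*c0 + (-32/9)*C*S^2*h^4*c0 + (-3)*C*S^4*c2 + (4)*C*S^4*h^2*c2 + (-4/3)*C*S^4*h^2*c0 + (16/9)*C*S^4*h^4*c0 + (-1)*C^2*S*c3 + (-3/4)*C^2*S*c1 + (7/3)*C^2*S*h^2*c3 + (-6)*C^2*S*h^2*c1 + (32/3)*C^2*S*h^4*c1 + (1)*C^2*S^3*c3 + (-3)*C^2*S^3*c1 + (-8/3)*C^2*S^3*h^2*c3 + (20/3)*C^2*S^3*h^2*c1 + (-16/3)*C^2*S^3*h^4*c1 + (-3)*C^3*c2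 + (-1/4)*C^3*c0 + (13)*C^3*h^2*c2 + (-4)*C^3*h^2*c0 + (-32/3)*C^3*h^4*c2 + (64/9)*C^3*h^4*c0 + (3)*C^3*S^2*c2 + (-1)*C^3*S^2*c0 + (-4)*C^3*S^2*h^2*c2 + (8/3)*C^3*S^2*h^2*c0 + (16/3)*C^3*S^2*h^4*c2 + (32/9)*C^3*S^2*h^4*c0 + (2)*C^4*S*c3 + (3)*C^4*S*c1 + (-4/3)*C^4*S*h^2*c3 + (4)*C^4*S*h^2*c1 + (-16/9)*C^4*S*h^4*c3 + (-32/3)*C^4*S*h^4*c1 + (6)*C^5*c2 + (1)*C^5*c0 + (-12)*C^5*h^2*c2 + (16/3)*C^5*h^2*c0 + (32/3)*C^5*h^4*c2 + (-32/9)*C^5*h^4*c0) + (h^2-3/4)*((-4/3)*S*c1 + (-4)*C*c0 + (-32/9)*C*h^2*c0 + (4/3)*C^2*S*c3 + (16/3)*C^2*S*c1 + (32/3)*C^2*S*h^2*c1 + (4)*C^3*c2 + (16/3)*C^3*c0 + (-32/3)*C^3*h^2*c2 + (32/3)*C^3*h^2*c0 + (-4)*C^4*S*c3 + (4)*C^4*S*c1 + (32/9)*C^4*S*h^2*c3 + (-64/3)*C^4*S*h^2*c1 + (-12)*C^5*c2 + (4/3)*C^5*c0 + (64/3)*C^5*h^2*c2 + (-32/3)*C^5*h^2*c0 + (8/3)*C^6*S*c3 + (-8)*C^6*S*c1 + (-32/9)*C^6*S*h^2*c3 + (32/3)*C^6*S*h^2*c1 + (8)*C^7*c2 + (-8/3)*C^7*c0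 + (-32/3)*C^7*h^2*c2 + (32/9)*C^7*h^2*c0)).
  - field.
  - replace (C^2+S^2-1) with 0 by lra. replace (h^2-3/4) with 0 by lra. field.
Qed.

Lemma rot1_n : forall C S h c0 c1 c2 c3 : R, C^2+S^2 = 1 -> h^2 = 3/4 ->
  (-C/2-h*S)^2+(h*C-S/2)^2 = 1.
Proof.
  intros C S h c0 c1 c2 c3 H1 H2. unfold Wt, bin.
  transitivity (1 + (C^2+S^2-1)*((1/4) + (1)*h^2) + (h^2-3/4)*((1))).
  - field.
  - replace (C^2+S^2-1) with 0 by lra. replace (h^2-3/4) with 0 by lra. field.
Qed.

Lemma rot1_a : forall C S h c0 c1 c2 c3 : R, C^2+S^2 = 1 -> h^2 = 3/4 ->
  4*(-C/2-h*S)^3-3*(-C/2-h*S) = (4*C^3-3*C).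
Proof.
  intros C S h c0 c1 c2 c3 H1 H2. unfold Wt, bin.
  transitivity ((4*C^3-3*C) + (C^2+S^2-1)*((-4)*S*h^3 + (-6)*C*h^2) + (h^2-3/4)*((-4)*S*h + (-6)*C + (4)*C^2*S*h + (6)*C^3)).
  - field.
  - replace (C^2+S^2-1) with 0 by lra. replace (h^2-3/4) with 0 by lra. field.
Qed.

Lemma rot1_b : forall C S h c0 c1 c2 c3 : R, C^2+S^2 = 1 -> h^2 = 3/4 ->
  3*(h*C-S/2)-4*(h*C-S/2)^3 = (3*S-4*S^3).
Proof.
  intros C S h c0 c1 c2 c3 H1 H2. unfold Wt, bin.
  transitivity ((3*S-4*S^3) + (C^2+S^2-1)*((9/2)*S + (-3)*C*h) + (h^2-3/4)*((6)*C^2*S + (-4)*C^3*h)).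
  - field.
  - replace (C^2+S^2-1) with 0 by lra. replace (h^2-3/4) with 0 by lra. field.
Qed.

Lemma rot2_n : forall C S h c0 c1 c2 c3 : R, C^2+S^2 = 1 -> h^2 = 3/4 ->
  (-C/2+h*S)^2+(-h*C-S/2)^2 = 1.
Proof.
  intros C S h c0 c1 c2 c3 H1 H2. unfold Wt, bin.
  transitivity (1 + (C^2+S^2-1)*((1/4) + (1)*h^2) + (h^2-3/4)*((1))).
  - field.
  - replace (C^2+S^2-1) with 0 by lra. replace (h^2-3/4) with 0 by lra. field.
Qed.

Lemma rot2_a : forall C S h c0 c1 c2 c3 : R, C^2+S^2 = 1 -> h^2 = 3/4 ->
  4*(-C/2+h*S)^3-3*(-C/2+h*S) = (4*C^3-3*C).
Proof.
  intros C S h c0 c1 c2 c3 H1 H2. unfold Wt, bin.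
  transitivity ((4*C^3-3*C) + (C^2+S^2-1)*((4)*S*h^3 + (-6)*C*h^2) + (h^2-3/4)*((4)*S*h + (-6)*C + (-4)*C^2*S*h + (6)*C^3)).
  - field.
  - replace (C^2+S^2-1) with 0 by lra. replace (h^2-3/4) with 0 by lra. field.
Qed.

Lemma rot2_b : forall C S h c0 c1 c2 c3 : R, C^2+S^2 = 1 -> h^2 = 3/4 ->
  3*(-h*C-S/2)-4*(-h*C-S/2)^3 = (3*S-4*S^3).
Proof.
  intros C S h c0 c1 c2 c3 H1 H2. unfold Wt, bin.
  transitivity ((3*S-4*S^3) + (C^2+S^2-1)*((9/2)*S + (3)*C*h) + (h^2-3/4)*((6)*C^2*S + (4)*C^3*h)).
  - field.
  - replace (C^2+S^2-1) with 0 by lra. replace (h^2-3/4) with 0 by lra. field.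
Qed.

Lemma trig3 : forall x, cos (3*x) = 4*cos x^3 - 3*cos x /\ sin (3*x) = 3*sin x - 4*sin x^3.
Proof.
  intros x. replace (3*x) with (x + (x + x)) by ring.
  repeat rewrite ?cos_plus, ?sin_plus. pose proof (sin2_cos2 x) as H. unfold Rsqr in H.
  assert (H0 : sin x * sin x + cos x * cos x - 1 = 0) by lra.
  split.
  - transitivity (4*cos x^3 - 3*cos x - 3 * cos x * (sin x * sin x + cos x * cos x - 1)); [ring|].
    rewrite H0; ring.
  - transitivity (3*sin x - 4*sin x^3 + sin x * (sin x * sin x + cos x * cos x - 1) * 3 - 0); [ring|].
    rewrite H0; ring.
Qed.

Lemma cube_root : forall a b, a^2+b^2 = 1 ->
  exists C S, C^2+S^2 = 1 /\ 4*C^3-3*C = a /\ 3*S-4*S^3 = b.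
Proof.
  intros a b Hab.
  assert (Ha : -1 <= a <= 1) by nra.
  assert (Hs : sin (acos a) = Rabs b).
  { rewrite sin_acos by exact Ha. rewrite <- sqrt_Rsqr_abs. f_equal. unfold Rsqr. nra. }
  assert (Hc : cos (acos a) = a) by (apply cos_acos; exact Ha).
  destruct (Rle_dec 0 b) as [Hb|Hb].
  - exists (cos (acos a / 3)), (sin (acos a / 3)).
    destruct (trig3 (acos a / 3)) as [T1 T2].
    replace (3 * (acos a / 3)) with (acos a) in T1, T2 by field.
    split; [pose proof (sin2_cos2 (acos a / 3)); unfold Rsqr in *; nra|].
    split; [lra|]. rewrite Rabs_pos_eq in Hs by lra. lra.
  - exists (cos (- acos a / 3)), (sin (- acos a / 3)).
    destruct (trig3 (- acos a / 3)) as [T1 T2].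
    replace (3 * (- acos a / 3)) with (- acos a) in T1, T2 by field.
    rewrite cos_neg in T1. rewrite sin_neg in T2.
    split; [pose proof (sin2_cos2 (- acos a / 3)); unfold Rsqr in *; nra|].
    split; [lra|]. rewrite Rabs_left in Hs by lra. lra.
Qed.

Lemma Wt_nonneg : forall X Y, X^2+Y^2 = 1 -> 0 <= Wt (4*X^3-3*X) (3*Y-4*Y^3) X Y.
Proof.
  intros X Y H. unfold Wt.
  assert (E : 1 + 2*((4*X^3-3*X)*X + (3*Y-4*Y^3)*Y/3) = (4*X^2-1)^2/3).
  { assert (H0 : X^2+Y^2-1 = 0) by lra.
    transitivity ((4*X^2-1)^2/3 + (X^2+Y^2-1)*(2 - 16/3*(1-X^2) - 8/3*(X^2+Y^2-1))); [field|].
    rewrite H0. field. }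
  rewrite E. apply Rmult_le_pos; [apply Rmult_le_pos; [apply pow2_ge_0|lra]|lra].
Qed.

Lemma bin_exp : forall p (y u : vec) C S,
  ev p (fun i => C * y i + S * u i) =
  bin (Tr p y y y) (Tr p y y u) (Tr p y u u) (Tr p u u u) C S.
Proof.
  intros. rewrite ev_Tr. unfold bin, Tr, sum3, tt. field.
Qed.

Lemma nrm2_comb : forall (y u : vec) C S,
  nrm2 (fun i => C * y i + S * u i) = C^2 * nrm2 y + 2*C*S*dot y u + S^2 * nrm2 u.
Proof. intros. unfold nrm2, dot, sum3. ring. Qed.

Lemma abs_le_b : forall x M, Rabs x <= M -> -M <= x <= M.
Proof. intros x M H. unfold Rabs in H. destruct (Rcase_abs x); lra. Qed.

Lemma K2 : forall p M (y u : vec), (forall x, nrm2 x = 1 -> Rabs (ev p x) <= M) ->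
  nrm2 y = 1 -> nrm2 u = 1 -> dot y u = 0 ->
  (Tr p y y y)^2 + (Tr p y y u)^2 <= M^2.
Proof.
  intros p M y u Hb Hy Hu Hyu.
  assert (HM : 0 <= M). { pose proof (Hb y Hy). pose proof (Rabs_pos (ev p y)). lra. }
  set (c0 := Tr p y y y). set (c1 := Tr p y y u).
  set (c2 := Tr p y u u). set (c3 := Tr p u u u).
  destruct (Req_dec (c0^2+c1^2) 0) as [Hz|Hnz]. { rewrite Hz. nra. }
  set (R0 := sqrt (c0^2+c1^2)).
  assert (HR : 0 < R0) by (apply sqrt_lt_R0; nra).
  assert (HR2 : R0 * R0 = c0^2+c1^2) by (apply sqrt_sqrt; nra).
  destruct (cube_root (c0/R0) (c1/R0)) as [C [S [HCS [Ha Hb']]]].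
  { field_simplify; [|lra]. rewrite <- HR2. field. lra. }
  set (h := sqrt 3 / 2).
  assert (Hh : h^2 = 3/4).
  { unfold h. replace ((sqrt 3 / 2)^2) with ((sqrt 3 * sqrt 3)/4) by field.
    rewrite sqrt_sqrt; lra. }
  assert (Hv : forall X Y, X^2+Y^2 = 1 ->
     Rabs (bin c0 c1 c2 c3 X Y) <= M).
  { intros X Y HXY. unfold c0, c1, c2, c3. rewrite <- bin_exp. apply Hb.
    rewrite nrm2_comb, Hy, Hu, Hyu. lra. }
  pose proof (I1 C S h c0 c1 c2 c3 HCS Hh) as HI.
  pose proof (rot1_n C S h c0 c1 c2 c3 HCS Hh) as N1.
  pose proof (rot2_n C S h c0 c1 c2 c3 HCS Hh) as N2.
  pose proof (rot1_a C S h c0 c1 c2 c3 HCS Hh) as A1.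
  pose proof (rot2_a C S h c0 c1 c2 c3 HCS Hh) as A2.
  pose proof (rot1_b C S h c0 c1 c2 c3 HCS Hh) as B1.
  pose proof (rot2_b C S h c0 c1 c2 c3 HCS Hh) as B2.
  pose proof (Wt_nonneg _ _ HCS) as W0.
  pose proof (Wt_nonneg _ _ N1) as W1. rewrite A1, B1 in W1.
  pose proof (Wt_nonneg _ _ N2) as W2. rewrite A2, B2 in W2.
  pose proof (Hv _ _ HCS) as V0. pose proof (Hv _ _ N1) as V1. pose proof (Hv _ _ N2) as V2.
  rewrite Ha, Hb' in HI, W0, W1, W2.
  assert (Wsum : Wt (c0/R0) (c1/R0) C S + Wt (c0/R0) (c1/R0) (-C/2-h*S) (h*C-S/2)
     + Wt (c0/R0) (c1/R0) (-C/2+h*S) (-h*C-S/2) = 1).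
  { unfold Wt. field. lra. }
  assert (HRv : c0/R0*c0 + c1/R0*c1 = R0).
  { field_simplify; [|lra]. rewrite <- HR2. field. lra. }
  rewrite HRv in HI.
  set (w0 := Wt (c0/R0) (c1/R0) C S) in *.
  set (w1 := Wt (c0/R0) (c1/R0) (-C/2-h*S) (h*C-S/2)) in *.
  set (w2 := Wt (c0/R0) (c1/R0) (-C/2+h*S) (-h*C-S/2)) in *.
  set (b0 := bin c0 c1 c2 c3 C S) in *.
  set (b1 := bin c0 c1 c2 c3 (-C/2-h*S) (h*C-S/2)) in *.
  set (b2 := bin c0 c1 c2 c3 (-C/2+h*S) (-h*C-S/2)) in *.
  apply abs_le_b in V0. apply abs_le_b in V1. apply abs_le_b in V2.
  assert (R0 <= M) by nra.
  rewrite <- HR2. nra.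
Qed.

Definition bnd p M := forall x, nrm2 x = 1 -> Rabs (ev p x) <= M.

Lemma nrm2_nonneg : forall x, 0 <= nrm2 x.
Proof. intros x. unfold nrm2, sum3. nra. Qed.

Lemma nrm2_zero : forall x, nrm2 x = 0 -> x 0%nat = 0 /\ x 1%nat = 0 /\ x 2%nat = 0.
Proof. intros x H. unfold nrm2, sum3 in H. nra. Qed.

Lemma K3 : forall p M (y z : vec), bnd p M -> nrm2 y = 1 ->
  (Tr p y y z)^2 <= M^2 * nrm2 z.
Proof.
  intros p M y z Hb Hy.
  set (a := dot y z).
  set (w := fun i => z i - a * y i).
  assert (Hyw : dot y w = 0).
  { replace (dot y w) with (dot y z - a * nrm2 y) by (unfold w, dot, nrm2, sum3; ring).
    rewrite Hy. unfold a. ring. }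
  assert (Hz : nrm2 z = a^2 + nrm2 w).
  { replace (nrm2 w) with (nrm2 z - 2*a*dot y z + a^2*nrm2 y) by (unfold w, dot, nrm2, sum3; ring).
    rewrite Hy. unfold a. ring. }
  assert (Hlin : Tr p y y z = a * Tr p y y y + Tr p y y w).
  { unfold w, Tr, sum3. ring. }
  pose proof (Hb y Hy) as Hy0. rewrite ev_Tr in Hy0.
  assert (Hc0 : (Tr p y y y)^2 <= M^2).
  { apply abs_le_b in Hy0. nra. }
  destruct (Req_dec (nrm2 w) 0) as [Hw|Hw].
  - destruct (nrm2_zero w Hw) as [W0 [W1 W2]].
    assert (Tr p y y w = 0). { unfold Tr, sum3. rewrite W0, W1, W2. ring. }
    rewrite Hlin, H, Hz, Hw. nra.
  - pose proof (nrm2_nonneg w) as Hw0.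
    set (nw := sqrt (nrm2 w)).
    assert (Hnw : 0 < nw) by (apply sqrt_lt_R0; lra).
    assert (Hnw2 : nw * nw = nrm2 w) by (apply sqrt_sqrt; lra).
    set (u := fun i => w i / nw).
    assert (Hu : nrm2 u = 1).
    { replace (nrm2 u) with (nrm2 w / (nw*nw)) by (unfold u, nrm2, sum3; field; lra).
      rewrite Hnw2. field. lra. }
    assert (Hyu : dot y u = 0).
    { replace (dot y u) with (dot y w / nw) by (unfold u, dot, sum3; field; lra).
      rewrite Hyw. field. lra. }
    assert (Hwu : Tr p y y w = nw * Tr p y y u). { unfold u, Tr, sum3. field. lra. }
    pose proof (K2 p M y u Hb Hy Hu Hyu) as HK.
    rewrite Hlin, Hwu, Hz, <- Hnw2.
    set (c0 := Tr p y y y) in *. set (c1 := Tr p y y u) in *.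
    pose proof (pow2_ge_0 (a*c1 - nw*c0)) as Hsq.
    assert (Hm : (a^2 + nw*nw) * (c0^2+c1^2) <= (a^2 + nw*nw) * M^2).
    { apply Rmult_le_compat_l; [nra|exact HK]. }
    nra.
Qed.

Lemma K4 : forall p M (y z : vec), bnd p M ->
  (Tr p y y z)^2 <= M^2 * (nrm2 y)^2 * nrm2 z.
Proof.
  intros p M y z Hb.
  pose proof (nrm2_nonneg y) as Hy0.
  destruct (Req_dec (nrm2 y) 0) as [Hy|Hy].
  - destruct (nrm2_zero y Hy) as [Y0 [Y1 Y2]].
    assert (Tr p y y z = 0). { unfold Tr, sum3. rewrite Y0, Y1, Y2. ring. }
    rewrite H, Hy. pose proof (nrm2_nonneg z). nra.
  - set (n := sqrt (nrm2 y)).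
    assert (Hn : 0 < n) by (apply sqrt_lt_R0; lra).
    assert (Hn2 : n * n = nrm2 y) by (apply sqrt_sqrt; lra).
    set (u := fun i => y i / n).
    assert (Hu : nrm2 u = 1).
    { replace (nrm2 u) with (nrm2 y / (n*n)) by (unfold u, nrm2, sum3; field; lra).
      rewrite Hn2. field. lra. }
    assert (Hs : Tr p y y z = n^2 * Tr p u u z). { unfold u, Tr, sum3. field. lra. }
    pose proof (K3 p M u z Hb Hu) as HK.
    rewrite Hs, <- Hn2. pose proof (nrm2_nonneg z).
    replace ((n^2 * Tr p u u z)^2) with ((n*n)^2 * (Tr p u u z)^2) by ring.
    apply Rmult_le_compat_l with (r := (n*n)^2) in HK; [|nra]. nra.
Qed.

Definition quad (a00 a01 a02 a11 a12 a22 z0 z1 z2 : R) :=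
  a00*z0^2 + a11*z1^2 + a22*z2^2 + 2*a01*z0*z1 + 2*a02*z0*z2 + 2*a12*z1*z2.
Definition det3 (a00 a01 a02 a11 a12 a22 : R) :=
  a00*(a11*a22 - a12^2) - a01*(a01*a22 - a12*a02) + a02*(a01*a12 - a11*a02).
Definition sig2 (a00 a01 a02 a11 a12 a22 : R) :=
  a00*a11 - a01^2 + a00*a22 - a02^2 + a11*a22 - a12^2.

Lemma pd_det : forall a00 a01 a02 a11 a12 a22 e, 0 < e ->
  (forall z0 z1 z2, e*(z0^2+z1^2+z2^2) <= quad a00 a01 a02 a11 a12 a22 z0 z1 z2) ->
  0 <= det3 a00 a01 a02 a11 a12 a22.
Proof.
  intros a00 a01 a02 a11 a12 a22 e He H.
  pose proof (H 0 1 0) as H1. pose proof (H 0 0 1) as H2.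
  pose proof (H 0 a12 (-a11)) as H3.
  unfold quad in H1, H2, H3.
  assert (Ha11 : e <= a11) by nra.
  assert (Hm : 0 < a11*a22 - a12^2).
  { assert (E : a00*0^2 + a11*a12^2 + a22*(-a11)^2 + 2*a01*0*a12 + 2*a02*0*(-a11) + 2*a12*a12*(-a11)
        = a11*(a11*a22 - a12^2)) by ring.
    rewrite E in H3.
    assert (P : 0 < e*(0^2 + a12^2 + (-a11)^2)).
    { apply Rmult_lt_0_compat; [lra|]. assert (0 < a11^2) by (apply pow_lt; lra). nra. }
    assert (P2 : 0 < a11*(a11*a22 - a12^2)) by lra.
    destruct (Rle_dec (a11*a22 - a12^2) 0) as [Hn|Hn]; [|lra].
    exfalso. assert (a11*(a11*a22 - a12^2) <= 0) by nra. lra. }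
  set (z0 := a11*a22 - a12^2). set (z1 := a02*a12 - a01*a22). set (z2 := a01*a12 - a02*a11).
  pose proof (H z0 z1 z2) as Hz.
  assert (E : quad a00 a01 a02 a11 a12 a22 z0 z1 z2 = det3 a00 a01 a02 a11 a12 a22 * z0).
  { unfold quad, det3, z0, z1, z2. ring. }
  rewrite E in Hz.
  assert (0 <= det3 a00 a01 a02 a11 a12 a22 * z0) by nra.
  destruct (Rle_dec 0 (det3 a00 a01 a02 a11 a12 a22)) as [Hd|Hd]; [exact Hd|].
  exfalso. apply Rnot_le_lt in Hd. assert (Hz0 : 0 < z0) by (unfold z0; exact Hm).
  assert (det3 a00 a01 a02 a11 a12 a22 * z0 < 0).
  { nra. } lra.
Qed.

Lemma sig2_bound : forall a00 a01 a02 a11 a12 a22 m, 0 <= m ->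
  (forall z0 z1 z2, Rabs (quad a00 a01 a02 a11 a12 a22 z0 z1 z2) <= m*(z0^2+z1^2+z2^2)) ->
  - m^2 <= sig2 a00 a01 a02 a11 a12 a22.
Proof.
  intros a00 a01 a02 a11 a12 a22 m Hm H.
  destruct (Rle_dec (- m^2) (sig2 a00 a01 a02 a11 a12 a22)) as [Hd|Hd]; [exact Hd|].
  exfalso.
  set (s := sig2 a00 a01 a02 a11 a12 a22) in *.
  set (d := - s - m^2).
  assert (Hdp : 0 < d) by (unfold d; lra).
  set (ep := Rmin 1 (d / (2*m+2))).
  assert (Hep : 0 < ep).
  { unfold ep. apply Rmin_glb_lt; [lra|]. apply Rdiv_lt_0_compat; lra. }
  assert (Hep1 : ep <= 1) by (unfold ep; apply Rmin_l).
  assert (Hep2 : ep <= d / (2*m+2)) by (unfold ep; apply Rmin_r).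
  assert (Hep3 : ep * (2*m+2) <= d).
  { apply Rmult_le_compat_r with (r := 2*m+2) in Hep2; [|lra].
    replace (d / (2*m+2) * (2*m+2)) with d in Hep2 by (field; lra). lra. }
  set (t := m + ep).
  assert (Ht : t^2 < - s).
  { unfold t. assert (ep*ep <= ep*1) by (apply Rmult_le_compat_l; lra).
    unfold d in Hep3. nra. }
  assert (Dp : 0 <= det3 (t + a00) a01 a02 (t + a11) a12 (t + a22)).
  { apply (pd_det _ _ _ _ _ _ ep Hep). intros z0 z1 z2.
    pose proof (H z0 z1 z2) as Hz. apply abs_le_b in Hz.
    unfold quad in *. unfold t. nra. }
  assert (Dm : 0 <= det3 (t - a00) (-a01) (-a02) (t - a11) (-a12) (t - a22)).
  { apply (pd_det _ _ _ _ _ _ ep Hep). intros z0 z1 z2.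
    pose proof (H z0 z1 z2) as Hz. apply abs_le_b in Hz.
    unfold quad in *. unfold t. nra. }
  assert (E : det3 (t + a00) a01 a02 (t + a11) a12 (t + a22)
            + det3 (t - a00) (-a01) (-a02) (t - a11) (-a12) (t - a22) = 2*t*(t^2 + s)).
  { unfold det3, s, sig2. ring. }
  assert (0 < t) by (unfold t; lra).
  assert (0 <= t*(t^2+s)) by nra.
  assert (t*(t^2+s) < 0) by nra.
  lra.
Qed.

Definition mk3 (a b c : R) : vec := fun i => match i with 0%nat => a | 1%nat => b | _ => c end.
Definition ee (a : nat) : vec := fun i => if Nat.eqb i a then 1 else 0.
Definition Vx2 p x := sum3 (fun a => (Tr p x x (ee a))^2).
Definition Sm p x a b := Tr p x (ee a) (ee b).
Definition Dx p x := sum3 (fun a => sum3 (fun b => (Sm p x a b)^2)) - (sum3 (fun a => Sm p x a a))^2.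

Lemma sq_abs_le : forall q r, 0 <= r -> q^2 <= r^2 -> Rabs q <= r.
Proof. intros q r Hr H. unfold Rabs. destruct (Rcase_abs q); nra. Qed.

Lemma bnd_M_nonneg : forall p M, bnd p M -> 0 <= M.
Proof.
  intros p M H. assert (nrm2 (ee 0) = 1) by (unfold nrm2, sum3, ee; simpl; ring).
  pose proof (H _ H0). pose proof (Rabs_pos (ev p (ee 0))). lra.
Qed.

Lemma Vbound : forall p M x, bnd p M -> Vx2 p x <= M^2 * (nrm2 x)^2.
Proof.
  intros p M x Hb.
  set (z := fun a => Tr p x x (ee a)).
  assert (E1 : Tr p x x z = Vx2 p x).
  { unfold z, Vx2, Tr, sum3, ee; simpl. ring. }
  assert (E2 : nrm2 z = Vx2 p x).
  { unfold z, Vx2, nrm2, sum3. ring. }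
  pose proof (K4 p M x z Hb) as HK. rewrite E1, E2 in HK.
  assert (HV : 0 <= Vx2 p x) by (rewrite <- E2; apply nrm2_nonneg).
  pose proof (nrm2_nonneg x).
  destruct (Req_dec (Vx2 p x) 0) as [H0|H0]. { rewrite H0. nra. }
  assert (0 < Vx2 p x) by lra.
  nra.
Qed.

Lemma Dbound : forall p M x, bnd p M -> Dx p x <= 2 * M^2 * nrm2 x.
Proof.
  intros p M x Hb.
  pose proof (bnd_M_nonneg p M Hb) as HM.
  pose proof (nrm2_nonneg x) as Hx.
  set (m := M * sqrt (nrm2 x)).
  assert (Hm0 : 0 <= m) by (unfold m; apply Rmult_le_pos; [lra|apply sqrt_pos]).
  assert (Hm2 : m^2 = M^2 * nrm2 x).
  { unfold m. replace ((M * sqrt (nrm2 x))^2) with (M^2 * (sqrt (nrm2 x) * sqrt (nrm2 x))) by ring.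
    rewrite sqrt_sqrt; lra. }
  assert (Hq : forall z0 z1 z2,
    Rabs (quad (Sm p x 0 0) (Sm p x 0 1) (Sm p x 0 2) (Sm p x 1 1) (Sm p x 1 2) (Sm p x 2 2) z0 z1 z2)
      <= m*(z0^2+z1^2+z2^2)).
  { intros z0 z1 z2.
    assert (E : quad (Sm p x 0 0) (Sm p x 0 1) (Sm p x 0 2) (Sm p x 1 1) (Sm p x 1 2) (Sm p x 2 2) z0 z1 z2
                = Tr p (mk3 z0 z1 z2) (mk3 z0 z1 z2) x).
    { unfold quad, Sm, Tr, sum3, ee, mk3; simpl. field. }
    assert (En : nrm2 (mk3 z0 z1 z2) = z0^2+z1^2+z2^2) by (unfold nrm2, sum3, mk3; simpl; ring).
    rewrite E. apply sq_abs_le.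
    - apply Rmult_le_pos; [lra|]. nra.
    - pose proof (K4 p M (mk3 z0 z1 z2) x Hb) as HK. rewrite En in HK.
      replace ((m * (z0^2+z1^2+z2^2))^2) with (m^2 * (z0^2+z1^2+z2^2)^2) by ring.
      rewrite Hm2. nra. }
  pose proof (sig2_bound _ _ _ _ _ _ m Hm0 Hq) as Hs.
  assert (ED : Dx p x = -2 * sig2 (Sm p x 0 0) (Sm p x 0 1) (Sm p x 0 2) (Sm p x 1 1) (Sm p x 1 2) (Sm p x 2 2)).
  { unfold Dx, sig2, Sm, Tr, sum3, ee; simpl. field. }
  rewrite ED. nra.
Qed.

Lemma design : forall p,
  3 * Fn p =
   1/15 * (15 * Vx2 p (ee 0) + 3 * Dx p (ee 0) + 15 * Vx2 p (ee 1) + 3 * Dx p (ee 1)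
           + 15 * Vx2 p (ee 2) + 3 * Dx p (ee 2))
 + 2/15 * (15/4 * Vx2 p (mk3 1 1 0) + 3/2 * Dx p (mk3 1 1 0)
           + 15/4 * Vx2 p (mk3 1 (-1) 0) + 3/2 * Dx p (mk3 1 (-1) 0)
           + 15/4 * Vx2 p (mk3 1 0 1) + 3/2 * Dx p (mk3 1 0 1)
           + 15/4 * Vx2 p (mk3 1 0 (-1)) + 3/2 * Dx p (mk3 1 0 (-1))
           + 15/4 * Vx2 p (mk3 0 1 1) + 3/2 * Dx p (mk3 0 1 1)
           + 15/4 * Vx2 p (mk3 0 1 (-1)) + 3/2 * Dx p (mk3 0 1 (-1))).
Proof.
  intros p. unfold Fn, Vx2, Dx, Sm, Tr, sum3, ee, mk3, tt; simpl. field.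
Qed.

Lemma core : forall p M, bnd p M -> Fn p <= 7 * M^2.
Proof.
  intros p M Hb.
  assert (N0 : forall a, (a < 3)%nat -> nrm2 (ee a) = 1).
  { intros a Ha. destruct a as [|[|[|a]]]; try lia; unfold nrm2, sum3, ee; simpl; ring. }
  pose proof (design p) as D.
  pose proof (Vbound p M (ee 0) Hb). pose proof (Vbound p M (ee 1) Hb). pose proof (Vbound p M (ee 2) Hb).
  pose proof (Dbound p M (ee 0) Hb). pose proof (Dbound p M (ee 1) Hb). pose proof (Dbound p M (ee 2) Hb).
  rewrite !N0 in * by lia.
  pose proof (Vbound p M (mk3 1 1 0) Hb). pose proof (Dbound p M (mk3 1 1 0) Hb).
  pose proof (Vbound p M (mk3 1 (-1) 0) Hb). pose proof (Dbound p M (mk3 1 (-1) 0) Hb).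
  pose proof (Vbound p M (mk3 1 0 1) Hb). pose proof (Dbound p M (mk3 1 0 1) Hb).
  pose proof (Vbound p M (mk3 1 0 (-1)) Hb). pose proof (Dbound p M (mk3 1 0 (-1)) Hb).
  pose proof (Vbound p M (mk3 0 1 1) Hb). pose proof (Dbound p M (mk3 0 1 1) Hb).
  pose proof (Vbound p M (mk3 0 1 (-1)) Hb). pose proof (Dbound p M (mk3 0 1 (-1)) Hb).
  unfold nrm2, sum3, mk3 in *; simpl in *.
  lra.
Qed.

Lemma abs_le1 : forall a b c, a^2+b^2+c^2 = 1 -> Rabs a <= 1.
Proof. intros a b c H. apply sq_abs_le; [lra|]. nra. Qed.

Lemma mon_le : forall m1 m2, Rabs m1 <= 1 -> Rabs m2 <= 1 -> Rabs (m1*m2) <= 1.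
Proof.
  intros m1 m2 H1 H2. rewrite Rabs_mult.
  pose proof (Rabs_pos m1). pose proof (Rabs_pos m2). nra.
Qed.

Lemma tri_step : forall c m r K, Rabs m <= 1 -> Rabs r <= K -> Rabs (c*m + r) <= Rabs c + K.
Proof.
  intros c m r K Hm Hr. eapply Rle_trans; [apply Rabs_triang|].
  rewrite Rabs_mult. pose proof (Rabs_pos c). pose proof (Rabs_pos m). nra.
Qed.

Lemma eval_bound : forall p x, euclid_norm x = 1 ->
  Rabs (eval p x) <= Rabs (c300 p) + (Rabs (c210 p) + (Rabs (c201 p) + (Rabs (c120 p) +
    (Rabs (c111 p) + (Rabs (c102 p) + (Rabs (c030 p) + (Rabs (c021 p) + (Rabs (c012 p) +
    (Rabs (c003 p) + 0))))))))).
Proof.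
  intros p x Hx.
  assert (H : v1 x ^2 + v2 x ^2 + v3 x^2 = 1).
  { unfold euclid_norm in Hx. pose proof (sqrt_pos (v1 x ^ 2 + v2 x ^ 2 + v3 x ^ 2)).
    assert (0 <= v1 x ^ 2 + v2 x ^ 2 + v3 x ^ 2) by nra.
    rewrite <- (sqrt_sqrt (v1 x ^ 2 + v2 x ^ 2 + v3 x ^ 2)) by lra. rewrite Hx. ring. }
  assert (A1 : Rabs (v1 x) <= 1) by (apply (abs_le1 _ (v2 x) (v3 x)); lra).
  assert (A2 : Rabs (v2 x) <= 1) by (apply (abs_le1 _ (v1 x) (v3 x)); lra).
  assert (A3 : Rabs (v3 x) <= 1) by (apply (abs_le1 _ (v1 x) (v2 x)); lra).
  assert (A0 : Rabs 1 <= 1) by (rewrite Rabs_R1; lra).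
  unfold eval, coeffs, monom; simpl.
  repeat (apply tri_step; [repeat apply mon_le; assumption|]).
  rewrite Rabs_R0; lra.
Qed.

Lemma lub_ex : forall p, exists M, is_lub (sphere_values p) M.
Proof.
  intros p. destruct (completeness (sphere_values p)) as [M HM].
  - eexists. intros r [x [Hx Hr]]. rewrite Hr. apply eval_bound. exact Hx.
  - exists (Rabs (eval p (mkV 1 0 0))). exists (mkV 1 0 0). split; [|reflexivity].
    unfold euclid_norm; simpl. match goal with |- sqrt ?e = 1 => replace e with 1 by ring end. apply sqrt_1.
  - exists M. exact HM.
Qed.

Lemma un_lub : forall p, is_lub (sphere_values p) (uniform_norm p).
Proof.
  intros p. unfold uniform_norm. apply epsilon_spec. apply lub_ex.
Qed.

Lemma un_bnd : forall p, bnd p (uniform_norm p).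
Proof.
  intros p x Hx. destruct (un_lub p) as [Hub _]. apply Hub.
  exists (mkV (x 0%nat) (x 1%nat) (x 2%nat)). split; [|reflexivity].
  unfold euclid_norm; simpl. unfold nrm2, sum3 in Hx. match goal with |- sqrt ?e = 1 => replace e with (x 0%nat ^2 + x 1%nat ^2 + x 2%nat ^2) by ring end. rewrite Hx. apply sqrt_1.
Qed.

Lemma Fn_expl : forall p, Fn p = c300 p ^2 + c210 p ^2 / 3 + c201 p ^2 / 3 + c120 p ^2 / 3
   + c111 p ^2 / 6 + c102 p ^2 / 3 + c030 p ^2 + c021 p ^2 / 3 + c012 p ^2 / 3 + c003 p ^2.
Proof. intros p. unfold Fn, sum3, tt; simpl. field. Qed.

Lemma Fn_pos : forall p, p <> cubic_zero -> 0 < Fn p.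
Proof.
  intros p Hp. rewrite Fn_expl.
  destruct (Rle_dec (c300 p ^2 + c210 p ^2 / 3 + c201 p ^2 / 3 + c120 p ^2 / 3
   + c111 p ^2 / 6 + c102 p ^2 / 3 + c030 p ^2 + c021 p ^2 / 3 + c012 p ^2 / 3 + c003 p ^2) 0) as [H|H];
  [|lra].
  exfalso. apply Hp.
  pose proof (pow2_ge_0 (c300 p)). pose proof (pow2_ge_0 (c210 p)). pose proof (pow2_ge_0 (c201 p)).
  pose proof (pow2_ge_0 (c120 p)). pose proof (pow2_ge_0 (c111 p)). pose proof (pow2_ge_0 (c102 p)).
  pose proof (pow2_ge_0 (c030 p)). pose proof (pow2_ge_0 (c021 p)). pose proof (pow2_ge_0 (c012 p)).
  pose proof (pow2_ge_0 (c003 p)).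
  destruct p; simpl in *. unfold cubic_zero. f_equal; nra.
Qed.

Lemma part1 : forall p, p <> cubic_zero ->
  uniform_norm p / bombieri_norm p >= 1 / sqrt 7.
Proof.
  intros p Hp.
  set (M := uniform_norm p).
  pose proof (core p M (un_bnd p)) as HC.
  pose proof (bnd_M_nonneg p M (un_bnd p)) as HM.
  pose proof (Fn_pos p Hp) as HF.
  rewrite bomb_Fn. set (B := sqrt (Fn p)).
  assert (HB : 0 < B) by (apply sqrt_lt_R0; lra).
  assert (H7 : 0 < sqrt 7) by (apply sqrt_lt_R0; lra).
  assert (HBle : B <= sqrt 7 * M).
  { unfold B. rewrite <- (sqrt_pow2 M HM). rewrite <- sqrt_mult by lra.
    apply sqrt_le_1; lra. }
  apply Rle_ge. apply (Rmult_le_reg_r (B * sqrt 7)); [nra|].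
  replace (1 / sqrt 7 * (B * sqrt 7)) with B by (field; lra).
  replace (M / B * (B * sqrt 7)) with (sqrt 7 * M) by (field; lra).
  exact HBle.
Qed.

Definition col (rho : mat3) (i : nat) : vec := fun a => rho a i.
Definition rv (rho : mat3) (v : vec) : vec := fun a => sum3 (fun b => rho a b * v b).

Ltac get_orth H :=
  pose proof (H 0%nat 0%nat ltac:(lia) ltac:(lia)) as G00;
  pose proof (H 0%nat 1%nat ltac:(lia) ltac:(lia)) as G01;
  pose proof (H 0%nat 2%nat ltac:(lia) ltac:(lia)) as G02;
  pose proof (H 1%nat 0%nat ltac:(lia) ltac:(lia)) as G10;
  pose proof (H 1%nat 1%nat ltac:(lia) ltac:(lia)) as G11;
  pose proof (H 1%nat 2%nat ltac:(lia) ltac:(lia)) as G12;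
  pose proof (H 2%nat 0%nat ltac:(lia) ltac:(lia)) as G20;
  pose proof (H 2%nat 1%nat ltac:(lia) ltac:(lia)) as G21;
  pose proof (H 2%nat 2%nat ltac:(lia) ltac:(lia)) as G22;
  simpl in G00, G01, G02, G10, G11, G12, G20, G21, G22.

Lemma rtr : forall rho, is_orthogonal rho -> forall v,
  mat_inv_apply rho (mkV (rv rho v 0%nat) (rv rho v 1%nat) (rv rho v 2%nat)) = mkV (v 0%nat) (v 1%nat) (v 2%nat).
Proof.
  intros rho H v. get_orth H. unfold mat_inv_apply, rv, sum3; simpl. f_equal.
  - transitivity ((rho 0%nat 0%nat * rho 0%nat 0%nat + rho 1%nat 0%nat * rho 1%nat 0%nat + rho 2%nat 0%nat * rho 2%nat 0%nat) * v 0%nat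
      + (rho 0%nat 0%nat * rho 0%nat 1%nat + rho 1%nat 0%nat * rho 1%nat 1%nat + rho 2%nat 0%nat * rho 2%nat 1%nat) * v 1%nat
      + (rho 0%nat 0%nat * rho 0%nat 2%nat + rho 1%nat 0%nat * rho 1%nat 2%nat + rho 2%nat 0%nat * rho 2%nat 2%nat) * v 2%nat); [ring|].
    rewrite G00, G01, G02. ring.
  - transitivity ((rho 0%nat 1%nat * rho 0%nat 0%nat + rho 1%nat 1%nat * rho 1%nat 0%nat + rho 2%nat 1%nat * rho 2%nat 0%nat) * v 0%nat
      + (rho 0%nat 1%nat * rho 0%nat 1%nat + rho 1%nat 1%nat * rho 1%nat 1%nat + rho 2%nat 1%nat * rho 2%nat 1%nat) * v 1%nat
      + (rho 0%nat 1%nat * rho 0%nat 2%nat + rho 1%nat 1%nat * rho 1%nat 2%nat + rho 2%nat 1%nat * rho 2%nat 2%nat) * v 2%nat); [ring|].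
    rewrite G10, G11, G12. ring.
  - transitivity ((rho 0%nat 2%nat * rho 0%nat 0%nat + rho 1%nat 2%nat * rho 1%nat 0%nat + rho 2%nat 2%nat * rho 2%nat 0%nat) * v 0%nat
      + (rho 0%nat 2%nat * rho 0%nat 1%nat + rho 1%nat 2%nat * rho 1%nat 1%nat + rho 2%nat 2%nat * rho 2%nat 1%nat) * v 1%nat
      + (rho 0%nat 2%nat * rho 0%nat 2%nat + rho 1%nat 2%nat * rho 1%nat 2%nat + rho 2%nat 2%nat * rho 2%nat 2%nat) * v 2%nat); [ring|].
    rewrite G20, G21, G22. ring.
Qed.

Lemma ev_ext : forall p (f g : vec), (forall i, f i = g i) -> ev p f = ev p g.
Proof. intros p f g H. unfold ev. rewrite !H. reflexivity. Qed.

Lemma Tr_ext : forall p (a a' b b' c c' : vec), (forall i, a i = a' i) -> (forall i, b i = b' i) ->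
  (forall i, c i = c' i) -> Tr p a b c = Tr p a' b' c'.
Proof. intros. unfold Tr, sum3. rewrite !H, !H0, !H1. reflexivity. Qed.

Lemma pol : forall p (a b c : vec), Tr p a b c = /24 * (ev p (fun i => a i + b i + c i)
   - ev p (fun i => a i + b i - c i) - ev p (fun i => a i - b i + c i) + ev p (fun i => a i - b i - c i)).
Proof. intros. rewrite !ev_Tr. unfold Tr, sum3, tt. field. Qed.

Lemma Tr_rv : forall p s rho, is_orthogonal rho ->
  (forall x, eval p x = s * eval Ch33 (mat_inv_apply rho x)) ->
  forall a b c, Tr p (rv rho a) (rv rho b) (rv rho c) = s * Tr Ch33 a b c.
Proof.
  intros p s rho Ho Hp a b c.
  assert (Hev : forall v, ev p (rv rho v) = s * ev Ch33 v).
  { intros v. unfold ev at 1. rewrite Hp, rtr by exact Ho. reflexivity. }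
  rewrite !pol.
  rewrite (ev_ext p (fun i => rv rho a i + rv rho b i + rv rho c i) (rv rho (fun i => a i + b i + c i))) by (intros; unfold rv, sum3; ring).
  rewrite (ev_ext p (fun i => rv rho a i + rv rho b i - rv rho c i) (rv rho (fun i => a i + b i - c i))) by (intros; unfold rv, sum3; ring).
  rewrite (ev_ext p (fun i => rv rho a i - rv rho b i + rv rho c i) (rv rho (fun i => a i - b i + c i))) by (intros; unfold rv, sum3; ring).
  rewrite (ev_ext p (fun i => rv rho a i - rv rho b i - rv rho c i) (rv rho (fun i => a i - b i - c i))) by (intros; unfold rv, sum3; ring).
  rewrite !Hev. ring.
Qed.

Lemma bessel : forall rho, is_orthogonal rho -> forall v,
  sum3 (fun i => (dot (col rho i) v)^2) <= nrm2 v.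
Proof.
  intros rho H v. get_orth H.
  set (d0 := dot (col rho 0) v). set (d1 := dot (col rho 1) v). set (d2 := dot (col rho 2) v).
  set (w := fun a => v a - (d0 * rho a 0%nat + d1 * rho a 1%nat + d2 * rho a 2%nat)).
  pose proof (nrm2_nonneg w) as Hw.
  assert (E : nrm2 w = nrm2 v - 2*(d0^2+d1^2+d2^2)
     + d0*d0*(rho 0%nat 0%nat * rho 0%nat 0%nat + rho 1%nat 0%nat * rho 1%nat 0%nat + rho 2%nat 0%nat * rho 2%nat 0%nat)
     + d1*d1*(rho 0%nat 1%nat * rho 0%nat 1%nat + rho 1%nat 1%nat * rho 1%nat 1%nat + rho 2%nat 1%nat * rho 2%nat 1%nat)
     + d2*d2*(rho 0%nat 2%nat * rho 0%nat 2%nat + rho 1%nat 2%nat * rho 1%nat 2%nat + rho 2%nat 2%nat * rho 2%nat 2%nat)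
     + 2*d0*d1*(rho 0%nat 0%nat * rho 0%nat 1%nat + rho 1%nat 0%nat * rho 1%nat 1%nat + rho 2%nat 0%nat * rho 2%nat 1%nat)
     + 2*d0*d2*(rho 0%nat 0%nat * rho 0%nat 2%nat + rho 1%nat 0%nat * rho 1%nat 2%nat + rho 2%nat 0%nat * rho 2%nat 2%nat)
     + 2*d1*d2*(rho 0%nat 1%nat * rho 0%nat 2%nat + rho 1%nat 1%nat * rho 1%nat 2%nat + rho 2%nat 1%nat * rho 2%nat 2%nat)).
  { unfold w, nrm2, d0, d1, d2, dot, col, sum3. ring. }
  rewrite G00, G11, G22, G01, G02, G12 in E.
  unfold sum3. fold d0 d1 d2. lra.
Qed.

Lemma sum3_le : forall f g, (forall i, f i <= g i) -> sum3 f <= sum3 g.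
Proof. intros f g H. unfold sum3. pose proof (H 0%nat). pose proof (H 1%nat). pose proof (H 2%nat). lra. Qed.

Lemma chain : forall p rho, is_orthogonal rho ->
  sum3 (fun i => sum3 (fun j => sum3 (fun k => (Tr p (col rho i) (col rho j) (col rho k))^2))) <= Fn p.
Proof.
  intros p rho Ho.
  apply Rle_trans with (sum3 (fun a => sum3 (fun j => sum3 (fun k => (Tr p (ee a) (col rho j) (col rho k))^2)))).
  { apply Rle_trans with (sum3 (fun j => sum3 (fun k => sum3 (fun i => (dot (col rho i) (fun a => Tr p (ee a) (col rho j) (col rho k)))^2)))).
    - right.
      unfold dot, col, Tr, sum3, ee; simpl. ring.
    - apply Rle_trans with (sum3 (fun j => sum3 (fun k => nrm2 (fun a => Tr p (ee a) (col rho j) (col rho k))))).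
      + apply sum3_le; intro j. apply sum3_le; intro k. apply bessel; exact Ho.
      + right. unfold nrm2, sum3. ring. }
  apply Rle_trans with (sum3 (fun a => sum3 (fun b => sum3 (fun k => (Tr p (ee a) (ee b) (col rho k))^2)))).
  { apply Rle_trans with (sum3 (fun a => sum3 (fun k => sum3 (fun j => (dot (col rho j) (fun b => Tr p (ee a) (ee b) (col rho k)))^2)))).
    - right.
      unfold dot, col, Tr, sum3, ee; simpl. ring.
    - apply Rle_trans with (sum3 (fun a => sum3 (fun k => nrm2 (fun b => Tr p (ee a) (ee b) (col rho k))))).
      + apply sum3_le; intro a. apply sum3_le; intro k. apply bessel; exact Ho.
      + right. unfold nrm2, sum3. ring. }
  apply Rle_trans with (sum3 (fun a => sum3 (fun b => sum3 (fun c => (Tr p (ee a) (ee b) (ee c))^2)))).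
  { apply Rle_trans with (sum3 (fun a => sum3 (fun b => sum3 (fun k => (dot (col rho k) (fun c => Tr p (ee a) (ee b) (ee c)))^2)))).
    - right.
      unfold dot, col, Tr, sum3, ee; simpl. ring.
    - apply sum3_le; intro a. apply sum3_le; intro b. apply bessel; exact Ho. }
  right. unfold Fn, Tr, sum3, ee; simpl. ring.
Qed.

Lemma Fn_Ch : Fn Ch33 = 7.
Proof. rewrite Fn_expl. unfold Ch33; simpl. field. Qed.

Lemma col_rv : forall rho i, (i < 3)%nat -> forall a, col rho i a = rv rho (ee i) a.
Proof.
  intros rho i Hi a. destruct i as [|[|[|i]]]; try lia; unfold col, rv, sum3, ee; simpl; ring.
Qed.

Lemma chain_val : forall p s rho, is_orthogonal rho ->
  (forall x, eval p x = s * eval Ch33 (mat_inv_apply rho x)) ->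
  sum3 (fun i => sum3 (fun j => sum3 (fun k => (Tr p (col rho i) (col rho j) (col rho k))^2))) = 7 * s^2.
Proof.
  intros p s rho Ho Hp.
  assert (E : forall i j k, (i < 3)%nat -> (j < 3)%nat -> (k < 3)%nat ->
     Tr p (col rho i) (col rho j) (col rho k) = s * Tr Ch33 (ee i) (ee j) (ee k)).
  { intros i j k Hi Hj Hk. rewrite <- (Tr_rv p s rho Ho Hp).
    apply Tr_ext; apply col_rv; assumption. }
  unfold sum3. rewrite !E by lia. rewrite <- Fn_Ch.
  unfold Fn, Tr, sum3, ee; simpl. ring.
Qed.

Lemma Ch_bound : forall y, (v1 y^2 + v2 y^2 + v3 y^2) <= 1 -> Rabs (eval Ch33 y) <= 1.
Proof.
  intros y Hy.
  assert (E : eval Ch33 y = v1 y^3 - 3 * v1 y * (v2 y^2 + v3 y^2)).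
  { unfold eval, Ch33, coeffs, monom; simpl. ring. }
  rewrite E. apply sq_abs_le; [lra|].
  assert (E2 : (v1 y ^ 3 - 3 * v1 y * (v2 y ^ 2 + v3 y ^ 2))^2
     = (v1 y ^2 + (v2 y^2 + v3 y^2))^3 - (v2 y^2 + v3 y^2)*(3*v1 y ^2 - (v2 y^2 + v3 y^2))^2) by ring.
  rewrite E2.
  set (a := v1 y ^2) in *. set (w := v2 y^2 + v3 y^2) in *.
  assert (Ha : 0 <= a) by (unfold a; nra). assert (Hw : 0 <= w) by (unfold w; nra).
  assert (0 <= w*(3*a-w)^2) by (apply Rmult_le_pos; [lra|apply pow2_ge_0]).
  assert ((a+w)^3 <= 1).
  { assert (0 <= a + w) by lra. assert (a + w <= 1) by (unfold a, w in *; lra).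
    replace ((a+w)^3) with ((a+w)*((a+w)*(a+w))) by ring.
    assert ((a+w)*(a+w) <= 1) by nra. nra. }
  lra.
Qed.

Lemma part2 : forall p, is_CO3_pullback p Ch33 ->
  uniform_norm p / bombieri_norm p = 1 / sqrt 7.
Proof.
  intros p [s [rho [Hs [Ho Hp]]]].
  set (M := uniform_norm p).
  pose proof (core p M (un_bnd p)) as HC.
  pose proof (bnd_M_nonneg p M (un_bnd p)) as HM.
  pose proof (chain p rho Ho) as Hch. rewrite (chain_val p s rho Ho Hp) in Hch.
  assert (HMs : M <= s).
  { destruct (un_lub p) as [_ Hl]. apply Hl. intros r [x [Hx Hr]].
    rewrite Hr, Hp, Rabs_mult, (Rabs_pos_eq s) by lra.
    assert (Rabs (eval Ch33 (mat_inv_apply rho x)) <= 1).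
    { apply Ch_bound.
      pose proof (bessel rho Ho (mk3 (v1 x) (v2 x) (v3 x))) as HB.
      assert (Hx2 : v1 x ^2 + v2 x ^2 + v3 x^2 = 1).
      { unfold euclid_norm in Hx.
        assert (0 <= v1 x ^ 2 + v2 x ^ 2 + v3 x ^ 2) by nra.
        rewrite <- (sqrt_sqrt (v1 x ^ 2 + v2 x ^ 2 + v3 x ^ 2)) by lra. rewrite Hx. ring. }
      unfold nrm2, dot, col, sum3, mk3 in HB; simpl in HB.
      unfold mat_inv_apply; simpl. nra. }
    pose proof (Rabs_pos (eval Ch33 (mat_inv_apply rho x))). nra. }
  assert (HF : Fn p = 7 * s^2) by nra.
  assert (HMe : M = s) by nra.
  rewrite bomb_Fn, HF.
  assert (H7 : 0 < sqrt 7) by (apply sqrt_lt_R0; lra).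
  rewrite sqrt_mult by nra. rewrite sqrt_pow2 by lra.
  fold M. rewrite HMe. field. split; lra.
Qed.

Theorem theorem1p2 :
  (forall p : cubic3, p <> cubic_zero ->
     uniform_norm p / bombieri_norm p >= 1 / sqrt 7) /\
  (forall p : cubic3, is_CO3_pullback p Ch33 ->
     uniform_norm p / bombieri_norm p = 1 / sqrt 7).
Proof. split; [exact part1 | exact part2]. Qed.
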